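(* Let $G$ be an index coding problem on $n$ messages, let $1\le n_1<n$, and let $G_1$ and $G_2$ be the subproblems induced on $[1:n_1]$ and $[n_1+1:n]$, with capacity regions $\mathscr{C}_1\subseteq\mathbb{R}^{n_1}$ and $\mathscr{C}_2\subseteq\mathbb{R}^{n-n_1}$. If $G$ has an edge from every node of $G_1$ to every node of $G_2$ and from every node of $G_2$ to every node of $G_1$ (i.e., $[n_1+1:n]\subseteq A_j$ for all $j\le n_1$ and $[1:n_1]\subseteq A_j$ for all $j>n_1$), then \[ \mathscr{C}=\bigl\{({\bf R}_1,{\bf R}_2): {\bf R}_1\in\mathscr{C}_1,\ {\bf R}_2\in\mathscr{C}_2\bigr\}=\mathscr{C}_1\times\mathscr{C}_2. \]
   Context: Index coding: an instance with $n$ messages is specified by side information sets $A_1,\ldots,A_n$ with $A_j\subseteq[1:n]\setminus\{j\}$, equivalently a directed side information graph $G$ on $[1:n]$ with an edge $i\to j$ iff $i\in A_j$. A $(t_1,\ldots,t_n,r)$ index code (with $t_j$ nonnegative integers, $r$ a positive integer) consists of an encoder $\phi:\prod_i\{0,1\}^{t_i}\to\{0,1\}^r$ and decoders $\psi_j:\{0,1\}^r\times\prod_{k\in A_j}\{0,1\}^{t_k}\to\{0,1\}^{t_j}$ with $\psi_j(\phi(x^n),(x_k)_{k\in A_j})=x_j$ for all message tuples $x^n$ and all $j$. A nonnegative rate tuple is achievable if $R_j\le t_j/r$ for all $j$ for some such code; the capacity region is the closure of the set of achievable rate tuples. The subproblem induced on a vertex subset $S$ is the index coding problem with messages indexed by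 $S$ and side information sets $A_j\cap S$, $j\in S$ (i.e., the vertex-induced subgraph $G[S]$). *)

(* Defs.v *)
From mathcomp Require Import all_boot.
From Stdlib Require Import Reals.
Set Implicit Arguments. Unset Strict Implicit. Unset Printing Implicit Defensive.

(* An index coding problem on n messages: side information sets
   A j : {set 'I_n}, with j \notin A j (stated as a hypothesis where used). *)

Definition messages (n : nat) (t : 'I_n -> nat) : Type :=
  forall k : 'I_n, (t k).-tuple bool.

Definition is_index_code (n : nat) (A : 'I_n -> {set 'I_n}) (t : 'I_n -> nat)
  (r : nat) (phi : messages t -> r.-tuple bool)
  (psi : forall j : 'I_n, r.-tuple bool -> messages t -> (t j).-tuple bool) : Prop :=
  (forall (j : 'I_n) (y : r.-tuple bool) (x x' : messages t),
      (forall k, k \in A j -> x k = x' k) -> psi j y x = psi j y x') /\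
  (forall (x : messages t) (j : 'I_n), psi j (phi x) x = x j).

Definition achievable (n : nat) (A : 'I_n -> {set 'I_n}) (Rt : 'I_n -> R) : Prop :=
  (forall j, (0 <= Rt j)%R) /\
  exists (t : 'I_n -> nat) (r : nat), (0 < r)%N /\
    exists (phi : messages t -> r.-tuple bool)
           (psi : forall j : 'I_n, r.-tuple bool -> messages t -> (t j).-tuple bool),
      is_index_code A phi psi /\
      (forall j, (Rt j <= INR (t j) / INR r)%R).

(* Capacity region = closure (in R^n, standard topology) of the achievable set. *)
Definition in_capacity (n : nat) (A : 'I_n -> {set 'I_n}) (Rt : 'I_n -> R) : Prop :=
  forall eps : R, (0 < eps)%R ->
    exists Rt' : 'I_n -> R, achievable A Rt' /\
      (forall j, (Rabs (Rt j - Rt' j) < eps)%R).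

(* Subproblem induced on the image of an (injective, order-preserving)
   reindexing f : 'I_m -> 'I_n: messages indexed by the image, side
   information A_j intersected with the image. *)
Definition induced (m n : nat) (f : 'I_m -> 'I_n) (A : 'I_n -> {set 'I_n})
  : 'I_m -> {set 'I_m} :=
  fun j => [set k | f k \in A (f j)].

(* Main.v *)
Require Import Defs.
From mathcomp Require Import all_boot.
From Stdlib Require Import Reals.
From Stdlib Require Import ClassicalEpsilon FunctionalExtensionality PropExtensionality.
Set Implicit Arguments. Unset Strict Implicit. Unset Printing Implicit Defensive.

Definition good_enc (n : nat) (A : 'I_n -> {set 'I_n}) (t : 'I_n -> nat) (r : nat)
  (phi : messages t -> r.-tuple bool) : Prop :=
  forall j (x x' : messages t), (forall k, k \in A j -> x k = x' k) ->
    phi x = phi x' -> x j = x' j.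

Definition has_code (n : nat) (A : 'I_n -> {set 'I_n}) (t : 'I_n -> nat) (r : nat) :=
  exists phi : messages t -> r.-tuple bool, good_enc A phi.

Lemma good_of_code n (A : 'I_n -> {set 'I_n}) t r phi psi :
  @is_index_code n A t r phi psi -> good_enc A phi.
Proof.
case=> loc cor j x x' ag e.
transitivity (psi j (phi x) x); first by rewrite cor.
rewrite e (loc j (phi x') x x' ag); exact: cor.
Qed.

Lemma code_of_good n (A : 'I_n -> {set 'I_n}) t r (phi : messages t -> r.-tuple bool) :
  good_enc A phi -> exists psi, is_index_code A phi psi.
Proof.
move=> g.
pose m0 : messages t := fun k => nseq_tuple (t k) false.
pose P j y (x : messages t) := fun x'' : messages t =>
  (forall k, k \in A j -> x'' k = x k) /\ phi x'' = y.
exists (fun j y x => (epsilon (inhabits m0) (P j y x)) j); split.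
- move=> j y x x' ag.
  have -> : P j y x = P j y x'; last by [].
  apply: functional_extensionality => x''; apply: propositional_extensionality.
  rewrite /P; split; case=> H1 H2; split=> // k kA; rewrite H1 //; by rewrite ag.
- move=> x j.
  have [H1 H2] : P j (phi x) x (epsilon (inhabits m0) (P j (phi x) x)).
    by apply: epsilon_spec; exists x; split.
  exact: g.
Qed.

Definition bij (T U : finType) (e : #|T| = #|U|) (x : T) : U :=
  enum_val (cast_ord e (enum_rank x)).

Lemma bijK (T U : finType) (e : #|T| = #|U|) : cancel (bij e) (bij (esym e)).
Proof. by move=> x; rewrite /bij enum_valK cast_ordK enum_rankK. Qed.

Lemma bij_inj (T U : finType) (e : #|T| = #|U|) : injective (bij e).
Proof. exact: can_inj (bijK e). Qed.

Lemma cardA (m k : nat) : #|{: (m * k).-tuple bool}| = #|{: {ffun 'I_k -> m.-tuple bool}}|.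
Proof. by rewrite card_ffun !card_tuple card_bool card_ord expnM. Qed.

Lemma repeat_code n (A : 'I_n -> {set 'I_n}) t r k :
  has_code A t r -> has_code A (fun j => t j * k) (r * k).
Proof.
case=> phi g.
pose blk (x : messages (fun j => t j * k)) (i : 'I_k) : messages t :=
  fun j => bij (cardA (t j) k) (x j) i.
exists (fun x => bij (esym (cardA r k)) [ffun i => phi (blk x i)]).
move=> j x x' ag /bij_inj /ffunP e.
apply: (@bij_inj _ _ (cardA (t j) k)); apply/ffunP => i.
have := e i; rewrite !ffunE => /g; apply => kk kA.
by rewrite /blk ag.
Qed.

Definition xort r (u v : r.-tuple bool) : r.-tuple bool :=
  [tuple tnth u i (+) tnth v i | i < r].

Lemma xortK r (u v w : r.-tuple bool) : xort u w = xort v w -> u = v.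
Proof.
move=> e; apply: eq_from_tnth => i.
have := congr1 (fun z => tnth z i) e; rewrite /xort !tnth_mktuple.
by move/(congr1 (fun b => b (+) tnth w i)); rewrite !addbK.
Qed.

Lemma combine n1 n2 (A : 'I_(n1 + n2) -> {set 'I_(n1 + n2)})
  (h12 : forall (j : 'I_n1) (k : 'I_n2), rshift n1 k \in A (lshift n2 j))
  (h21 : forall (j : 'I_n1) (k : 'I_n2), lshift n2 j \in A (rshift n1 k))
  (t : 'I_(n1 + n2) -> nat) r :
  has_code (induced (@lshift n1 n2) A) (fun a => t (lshift n2 a)) r ->
  has_code (induced (@rshift n1 n2) A) (fun b => t (rshift n1 b)) r ->
  has_code A t r.
Proof.
case=> phi1 g1 [phi2 g2].
exists (fun x => xort (phi1 (fun a => x (lshift n2 a))) (phi2 (fun b => x (rshift n1 b)))).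
move=> j; move: (splitK j); case: (fintype.split j) => [a|b] /= <- x x' ag e.
- have e2 : (fun b => x (rshift n1 b)) = (fun b => x' (rshift n1 b)).
    by apply: functional_extensionality_dep => b; apply: ag.
  rewrite e2 in e; move/xortK: e => e.
  apply: (g1 a (fun a => x (lshift n2 a)) (fun a => x' (lshift n2 a))) => //.
  by move=> kk; rewrite inE => /ag.
- have e1 : (fun a => x (lshift n2 a)) = (fun a => x' (lshift n2 a)).
    by apply: functional_extensionality_dep => a; apply: ag.
  rewrite e1 in e.
  have e' : xort (phi2 (fun b => x (rshift n1 b))) (phi1 (fun a => x' (lshift n2 a)))
          = xort (phi2 (fun b => x' (rshift n1 b))) (phi1 (fun a => x' (lshift n2 a))).
    apply: eq_from_tnth => i; have := congr1 (fun z => tnth z i) e.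
    by rewrite /xort !tnth_mktuple addbC [in X in _ = X -> _]addbC => ->; rewrite addbC.
  move/xortK: e' => e'.
  apply: (g2 b (fun b => x (rshift n1 b)) (fun b => x' (rshift n1 b))) => //.
  by move=> kk; rewrite inE => /ag.
Qed.

Section Ext.
Variables (m n : nat) (f : 'I_m -> 'I_n) (t : 'I_n -> nat).

Definition castm (i j : 'I_n) (v : (t i).-tuple bool) : (t j).-tuple bool :=
  match i =P j with
  | ReflectT e => tcast (congr1 t e) v
  | ReflectF _ => nseq_tuple (t j) false
  end.
Arguments castm : clear implicits.

Lemma castm_id i v : castm i i v = v.
Proof.
rewrite /castm; case: eqP => [e|//]; rewrite (eq_irrelevance e erefl).
exact: tcast_id.
Qed.

Definition ext (d : messages t) (x1 : forall a, (t (f a)).-tuple bool) : messages t :=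
  fun k => match [pick a | f a == k] with
           | Some a => castm (f a) k (x1 a)
           | None => d k end.

Hypothesis finj : injective f.

Lemma ext_f d x1 a : ext d x1 (f a) = x1 a.
Proof.
rewrite /ext; case: pickP => [a' /eqP /finj ->|/(_ a)]; first exact: castm_id.
by rewrite eqxx.
Qed.

Lemma restrict (A : 'I_n -> {set 'I_n}) r :
  has_code A t r -> has_code (induced f A) (fun a => t (f a)) r.
Proof.
case=> phi g.
pose d : messages t := fun k => nseq_tuple (t k) false.
exists (fun x1 => phi (ext d x1)) => a x1 x1' ag e.
rewrite -(ext_f d x1) -(ext_f d x1'); apply: g e => k kA.
rewrite /ext; case: pickP => [b /eqP eb|//].
congr castm; apply: ag; rewrite inE eb //.
Qed.
End Ext.

Lemma split_l n1 n2 (a : 'I_n1) : fintype.split (lshift n2 a) = inl a.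
Proof. exact: (unsplitK (inl _ a)). Qed.
Lemma split_r n1 n2 (b : 'I_n2) : fintype.split (rshift n1 b) = inr b.
Proof. exact: (unsplitK (inr _ b)). Qed.
Lemma INR_ne0 r : (0 < r)%N -> INR r <> 0%R.
Proof. by case: r => // r _; apply: not_0_INR. Qed.

Lemma restr_cap m n (f : 'I_m -> 'I_n) (finj : injective f) A Rt :
  in_capacity A Rt -> in_capacity (induced f A) (fun i => Rt (f i)).
Proof.
move=> H eps he; have [Rt' [[nn [t [r [r0 [phi [psi [code rate]]]]]]] cl]] := H eps he.
exists (fun i => Rt' (f i)); split; last by move=> j; apply: cl.
split; first by move=> j; apply: nn.
exists (fun a => t (f a)), r; split=> //.
have [phi1 g1] := restrict finj (ex_intro _ phi (good_of_code code)).
have [psi1 c1] := code_of_good g1.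
by exists phi1, psi1; split=> // j; apply: rate.
Qed.

Theorem theorem3 (n1 n2 : nat) (A : 'I_(n1 + n2) -> {set 'I_(n1 + n2)})
  (hA : forall j, j \notin A j)
  (hn1 : (0 < n1)%N) (hn2 : (0 < n2)%N)
  (h12 : forall (j : 'I_n1) (k : 'I_n2), rshift n1 k \in A (lshift n2 j))
  (h21 : forall (j : 'I_n1) (k : 'I_n2), lshift n2 j \in A (rshift n1 k)) :
  forall Rt : 'I_(n1 + n2) -> R,
    in_capacity A Rt <->
    (in_capacity (induced (@lshift n1 n2) A) (fun i => Rt (lshift n2 i)) /\
     in_capacity (induced (@rshift n1 n2) A) (fun i => Rt (rshift n1 i))).
Proof.
move=> Rt; split.
  by move=> H; split; apply: restr_cap => //; [apply: lshift_inj | apply: rshift_inj].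
case=> H1 H2 eps he.
have [Rt1 [[nn1 [t1 [r1 [r10 [phi1 [psi1 [code1 rate1]]]]]]] cl1]] := H1 eps he.
have [Rt2 [[nn2 [t2 [r2 [r20 [phi2 [psi2 [code2 rate2]]]]]]] cl2]] := H2 eps he.
pose tt j := match fintype.split j with inl a => (t1 a * r2)%N | inr b => (t2 b * r1)%N end.
pose Rt' j := match fintype.split j with inl a => Rt1 a | inr b => Rt2 b end.
have hc : has_code A tt (r1 * r2).
  apply: combine => //.
    have -> : (fun a => tt (lshift n2 a)) = (fun a => t1 a * r2)%N.
      by apply: functional_extensionality => a; rewrite /tt split_l.
    exact: repeat_code (ex_intro _ phi1 (good_of_code code1)).
  have -> : (fun b => tt (rshift n1 b)) = (fun b => t2 b * r1)%N.
    by apply: functional_extensionality => b; rewrite /tt split_r.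
  rewrite mulnC; exact: repeat_code (ex_intro _ phi2 (good_of_code code2)).
have [phi g] := hc; have [psi code] := code_of_good g.
have e1 := INR_ne0 r10; have e2 := INR_ne0 r20.
exists Rt'; split.
  split; first by move=> j; rewrite /Rt'; case: (fintype.split j).
  exists tt, (r1 * r2)%N; split; first by rewrite muln_gt0 r10 r20.
  exists phi, psi; split=> // j; rewrite /Rt' /tt; case: (fintype.split j) => [a|b].
    have -> : (INR (t1 a * r2) / INR (r1 * r2) = INR (t1 a) / INR r1)%R.
      by rewrite !mult_INR; field.
    exact: rate1.
  have -> : (INR (t2 b * r1) / INR (r1 * r2) = INR (t2 b) / INR r2)%R.
    by rewrite !mult_INR; field.
  exact: rate2.
move=> j; rewrite /Rt'; move: (splitK j); case: (fintype.split j) => [a|b] /= <-.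
  exact: cl1.
exact: cl2.
Qed.
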